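(* Let $G_1,\dots,G_k$ be rooted binary trees and let $\mathcal B(G_1,\dots,G_k)$ be the set of compatible bipartitions of $\bigcup_{i=1}^k \mathcal L(G_i)$. Then $|\mathcal B(G_1,\dots,G_k)| \le \frac{4^k}{2}-1$.
   Context: All trees are rooted and binary; $\mathcal L(T)$ denotes the leaf set of $T$. For a tree $G_i$ with root having children $r_l, r_r$, write $G_{i_l}=G_i[r_l]$ and $G_{i_r}=G_i[r_r]$ for its left and right root subtrees. A bipartition $(L_l,L_r)$ of a set is a pair of nonempty disjoint sets whose union is the set, considered up to swapping the two parts. A bipartition $(L_l,L_r)$ of $\bigcup_{i=1}^k\mathcal L(G_i)$ is compatible with $\{G_1,\dots,G_k\}$ if for each $i$ one of the following holds: (1) $\mathcal L(G_i)\subseteq L_l$; (2) $\mathcal L(G_i)\subseteq L_r$; (3) $\mathcal L(G_{i_l})\subseteq L_l$ and $\mathcal L(G_{i_r})\subseteq L_r$; (4) $\mathcal L(G_{i_l})\subseteq L_r$ and $\mathcal L(G_{i_r})\subseteq L_l$. *)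

(* Defs.v *)
From mathcomp Require Import all_boot.
Set Implicit Arguments. Unset Strict Implicit. Unset Printing Implicit Defensive.

Inductive btree (T : Type) : Type :=
| BLeaf of T
| BNode of btree T & btree T.

Arguments BLeaf {T} _.
Arguments BNode {T} _ _.

Fixpoint leaves {T : Type} (t : btree T) : seq T :=
  match t with
  | BLeaf x => [:: x]
  | BNode l r => leaves l ++ leaves r
  end.

Definition leafset {T : finType} (t : btree T) : {set T} := [set x in leaves t].

Definition well_labelled {T : finType} (t : btree T) : bool := uniq (leaves t).

(* Compatibility of the (ordered) pair (Ll, Lr) with a single tree G:
   conditions (1)-(4); (3),(4) only make sense when the root has children. *)
Definition compat_tree {T : finType} (Ll Lr : {set T}) (G : btree T) : bool :=
  [|| leafset G \subset Ll, leafset G \subset Lr |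
    match G with
    | BLeaf _ => false
    | BNode gl gr =>
        ((leafset gl \subset Ll) && (leafset gr \subset Lr)) ||
        ((leafset gl \subset Lr) && (leafset gr \subset Ll))
    end].

Definition all_leaves {T : finType} (k : nat) (G : 'I_k -> btree T) : {set T} :=
  \bigcup_(i < k) leafset (G i).

Definition is_bipartition {T : finType} (U Ll Lr : {set T}) : bool :=
  [&& Ll != set0, Lr != set0, [disjoint Ll & Lr] & Ll :|: Lr == U].

Definition compatible {T : finType} (k : nat) (G : 'I_k -> btree T)
  (Ll Lr : {set T}) : bool :=
  is_bipartition (all_leaves G) Ll Lr && [forall i, compat_tree Ll Lr (G i)].

(* B(G_1..G_k): compatible bipartitions, considered up to swapping the parts,
   each represented as the unordered pair {Ll, Lr}. *)
Definition compat_bipartitions {T : finType} (k : nat) (G : 'I_k -> btree T)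
  : {set {set {set T}}} :=
  [set P : {set {set T}} |
     [exists Ll : {set T}, exists Lr : {set T},
        (P == [set Ll; Lr]) && compatible G Ll Lr]].

(* Main.v *)
Require Import Defs.
From mathcomp Require Import all_boot.
From mathcomp Require Import zify.

Section Aux.
Set Implicit Arguments. Unset Strict Implicit.
Variable T : finType.

Lemma leafset_node (l r : btree T) :
  leafset (BNode l r) = leafset l :|: leafset r.
Proof. by apply/setP => x; rewrite !inE /= mem_cat. Qed.

Definition part (t : btree T) (c : 'I_4) : {set T} :=
  if nat_of_ord c == 0 then leafset t else if nat_of_ord c == 1 then set0 else
  match t with
  | BNode gl gr => if nat_of_ord c == 2 then leafset gl else leafset gr
  | BLeaf _ => set0
  end.

Definition codeT (Ll Lr : {set T}) (t : btree T) : 'I_4 :=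
  if leafset t \subset Ll then inord 0 else
  if leafset t \subset Lr then inord 1 else
  match t with
  | BNode gl gr => if (leafset gl \subset Ll) && (leafset gr \subset Lr)
                   then inord 2 else inord 3
  | BLeaf _ => inord 0
  end.

Lemma sub_disj (A Ll Lr : {set T}) :
  A \subset Lr -> [disjoint Ll & Lr] -> A :&: Ll = set0.
Proof.
move=> sub dis; apply/setP => x; rewrite !inE.
apply/negbTE/negP => /andP [xA xL].
move/disjoint_setI0/setP/(_ x): dis; rewrite !inE xL (subsetP sub x xA) //.
Qed.

Lemma part_code (Ll Lr : {set T}) (t : btree T) :
  compat_tree Ll Lr t -> [disjoint Ll & Lr] ->
  part t (codeT Ll Lr t) = leafset t :&: Ll.
Proof.
move=> ct dis; rewrite /codeT.
case: ifP => [s1 | ns1].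
  by rewrite /part inordK //=; apply/esym/setIidPl.
case: ifP => [s2 | ns2].
  by rewrite /part inordK //= (@sub_disj _ _ _ s2 dis).
move: ct; rewrite /compat_tree ns1 ns2 /=.
case: t ns1 ns2 => [x | gl gr] //= ns1 ns2.
rewrite leafset_node setIUl.
case: ifP => [/andP [h1 h2] _ | nh].
  rewrite /part inordK //= (@sub_disj _ _ _ h2 dis) setU0; by apply/esym/setIidPl.
move=> /andP [h1 h2].
by rewrite /part inordK //= (@sub_disj _ _ _ h1 dis) set0U; apply/esym/setIidPl.
Qed.

Variable k : nat.
Variable G : 'I_k -> btree T.

Definition Lof (f : {ffun 'I_k -> 'I_4}) : {set T} :=
  \bigcup_(i < k) part (G i) (f i).

Definition Phi (f : {ffun 'I_k -> 'I_4}) : {set {set T}} :=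
  [set Lof f; all_leaves G :\: Lof f].

Definition code (Ll Lr : {set T}) : {ffun 'I_k -> 'I_4} :=
  [ffun i => codeT Ll Lr (G i)].

Lemma compat_sym Ll Lr : compatible G Ll Lr -> compatible G Lr Ll.
Proof.
case/andP => /and4P [h1 h2 h3 h4] /forallP h.
apply/andP; split.
  by apply/and4P; split => //; [rewrite disjoint_sym | rewrite setUC].
apply/forallP => i; move: (h i); rewrite /compat_tree.
case/or3P => [-> | -> |]; rewrite ?orbT //.
by case: (G i) => //= gl gr /orP [] ->; rewrite !orbT.
Qed.

Lemma Lof_code Ll Lr : compatible G Ll Lr -> Lof (code Ll Lr) = Ll.
Proof.
case/andP => /and4P [h1 h2 h3 /eqP h4] /forallP h.
apply/setP => x; apply/bigcupP/idP.
  by case=> i _; rewrite ffunE (@part_code _ _ _ (h i) h3) inE => /andP [].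
move=> xL.
have : x \in all_leaves G by rewrite -h4 inE xL.
case/bigcupP => i _ xi; exists i => //.
by rewrite ffunE (@part_code _ _ _ (h i) h3) inE xi xL.
Qed.

Lemma Phi_code Ll Lr : compatible G Ll Lr -> Phi (code Ll Lr) = [set Ll; Lr].
Proof.
move=> c; rewrite /Phi (Lof_code c); congr [set _; _].
case/andP: c => /and4P [h1 h2 h3 /eqP h4] _.
apply/setP => x; rewrite -h4 !inE.
case xr: (x \in Lr); case xl: (x \in Ll) => //=.
by move/disjoint_setI0/setP/(_ x): h3; rewrite !inE xl xr.
Qed.

End Aux.

Theorem lemma2 (T : finType) (k : nat) (G : 'I_k -> btree T) :
  0 < k ->
  (forall i, well_labelled (G i)) ->
  #|compat_bipartitions G| <= 4 ^ k %/ 2 - 1.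
Proof.
move=> k0 _.
set B := compat_bipartitions G.
pose C := [set f | Phi G f \in B].
have HB : forall P, P \in B -> exists Ll Lr, P = [set Ll; Lr] /\ compatible G Ll Lr.
  move=> P; rewrite inE => /existsP [Ll /existsP [Lr /andP [/eqP -> c]]].
  by exists Ll, Lr.
have H1 : 2 * #|B| <= #|C|.
  rewrite -[#|C|]sum1_card (partition_big (Phi G) (mem B)); last by move=> f; rewrite inE.
  rewrite -[#|B|]sum1_card big_distrr /= muln1; apply: leq_sum => P PB.
  have [Ll [Lr [eP c]]] := HB P PB.
  have c' := compat_sym c.
  pose f1 := code G Ll Lr; pose f2 := code G Lr Ll.
  have e1 : Phi G f1 = P by rewrite /f1 Phi_code.
  have e2 : Phi G f2 = P by rewrite /f2 Phi_code // eP setUC.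
  have ne : f1 != f2.
    apply/negP => /eqP e.
    have := Lof_code c; rewrite -/f1 e /f2 (Lof_code c') => eLL.
    case/andP: c => /and4P [h1 h2 h3 _] _.
    move: h3; rewrite eLL -setI_eq0 setIid => /eqP E; by rewrite E eqxx in h1.
  rewrite sum1_card.
  apply: (@leq_trans #|[set f1; f2]|); first by rewrite cards2 ne.
  apply: subset_leq_card; apply/subsetP => f; rewrite in_set2 => /orP [] /eqP ->;
    by rewrite unfold_in /= [_ \in C]inE ?e1 ?e2 PB eqxx.
pose a0 : {ffun 'I_k -> 'I_4} := [ffun=> inord 0].
pose a1 : {ffun 'I_k -> 'I_4} := [ffun=> inord 1].
have nset0 : forall f, f \in C -> set0 \notin Phi G f.
  move=> f; rewrite inE => /HB [Ll [Lr [-> c]]].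
  case/andP: c => /and4P [h1 h2 _ _] _.
  by rewrite !inE negb_or eq_sym h1 eq_sym h2.
have L0 : Lof G a0 = all_leaves G.
  by apply: eq_bigr => i _; rewrite ffunE /part inordK.
have L1 : Lof G a1 = set0.
  by apply: big1 => i _; rewrite ffunE /part inordK.
have a0C : a0 \notin C.
  by apply/negP => /nset0; rewrite /Phi L0 setDv !inE eqxx orbT.
have a1C : a1 \notin C.
  by apply/negP => /nset0; rewrite /Phi L1 !inE eqxx.
have a01 : a0 != a1.
  apply/negP => /eqP /ffunP /(_ (Ordinal k0)) /(congr1 val).
  by rewrite !ffunE /= !inordK.
have H2 : #|C| + 2 <= 4 ^ k.
  have : C \subset ~: [set a0; a1].
    apply/subsetP => f fC; rewrite !inE; apply/negP => /orP [] /eqP E;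
      [by move: a0C; rewrite -E fC | by move: a1C; rewrite -E fC].
  move/subset_leq_card.
  have := cardsC [set a0; a1]; rewrite cards2 a01 card_ffun !card_ord.
  lia.
lia.
Qed.
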